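(* Define $q:\mathbb R_+\times\mathbb R^4\times\mathbb R^4\to\mathbb R$ by $$q(\Sigma,\mathbf a,\boldsymbol\zeta)=\nu a_1+\frac12a_2(\sigma^2-\Sigma^2)+\sigma\eta a_3+\frac12(\eta^2+\xi)a_4,$$ where $\mathbf a=(a_1,a_2,a_3,a_4)^\top$ and $\boldsymbol\zeta=(\nu,\sigma,\eta,\xi)^\top$. Then for all $\Sigma\in\mathbb R_+$, $\mathbf a\in\mathbb R^4$, $\boldsymbol\zeta\in\mathbb R^4$, $$|q(\Sigma,\mathbf a,\boldsymbol\zeta)|\le\max(1,\Sigma)\|\mathbf a\|\,\|\boldsymbol\zeta-\boldsymbol\zeta^0(\Sigma)\|+\|\mathbf a\|\,\|\boldsymbol\zeta-\boldsymbol\zeta^0(\Sigma)\|^2.$$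
   Context: $\boldsymbol\zeta^0(\Sigma)=(0,\Sigma,0,0)^\top$ and $\|\cdot\|$ denotes the Euclidean norm on $\mathbb R^4$. *)

(* Defs.v *)
From Stdlib Require Import Reals.
Open Scope R_scope.

Definition R4 : Type := (R * R * R * R)%type.

Definition norm4 (v : R4) : R :=
  let '(x1, x2, x3, x4) := v in sqrt (x1^2 + x2^2 + x3^2 + x4^2).

Definition sub4 (v w : R4) : R4 :=
  let '(v1, v2, v3, v4) := v in let '(w1, w2, w3, w4) := w in
  (v1 - w1, v2 - w2, v3 - w3, v4 - w4).

Definition zeta0 (Sig : R) : R4 := (0, Sig, 0, 0).

Definition q (Sig : R) (a zeta : R4) : R :=
  let '(a1, a2, a3, a4) := a in
  let '(nu, sig, eta, xi) := zeta in
  nu * a1 + / 2 * a2 * (sig^2 - Sig^2) + sig * eta * a3 + / 2 * (eta^2 + xi) * a4.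

(* Main.v *)
Require Import Defs.
From Stdlib Require Import Reals Lra Psatz.
Open Scope R_scope.

Lemma cs4 (a1 a2 a3 a4 b1 b2 b3 b4 : R) :
  (a1*b1+a2*b2+a3*b3+a4*b4)^2 <= (a1^2+a2^2+a3^2+a4^2)*(b1^2+b2^2+b3^2+b4^2).
Proof.
  assert (H : (a1^2+a2^2+a3^2+a4^2)*(b1^2+b2^2+b3^2+b4^2) - (a1*b1+a2*b2+a3*b3+a4*b4)^2
   = (a1*b2-a2*b1)^2+(a1*b3-a3*b1)^2+(a1*b4-a4*b1)^2+(a2*b3-a3*b2)^2+(a2*b4-a4*b2)^2+(a3*b4-a4*b3)^2) by ring.
  assert (0 <= (a1*b2-a2*b1)^2+(a1*b3-a3*b1)^2+(a1*b4-a4*b1)^2+(a2*b3-a3*b2)^2+(a2*b4-a4*b2)^2+(a3*b4-a4*b3)^2).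
  { repeat apply Rplus_le_le_0_compat; apply pow2_ge_0. }
  lra.
Qed.



Lemma abs_le_sq (x y : R) : 0 <= y -> x^2 <= y^2 -> Rabs x <= y.
Proof.
  intros Hy H. destruct (Rle_dec (Rabs x) y) as [h|h]; auto.
  exfalso. assert (y < Rabs x) by lra.
  assert (x^2 = Rabs x ^2) by (rewrite <- (pow2_abs x); reflexivity).
  nra.
Qed.

Theorem lemma5p4 (Sig : R) (a zeta : R4) :
  0 <= Sig ->
  Rabs (q Sig a zeta) <=
    Rmax 1 Sig * norm4 a * norm4 (sub4 zeta (zeta0 Sig))
    + norm4 a * (norm4 (sub4 zeta (zeta0 Sig)))^2.
Proof.
  intros HS.
  destruct a as [[[a1 a2] a3] a4]. destruct zeta as [[[n s] e] x].
  unfold q, norm4, sub4, zeta0.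
  set (d1 := n - 0). set (d2 := s - Sig). set (d3 := e - 0). set (d4 := x - 0).
  set (A2 := a1^2+a2^2+a3^2+a4^2). set (D2 := d1^2+d2^2+d3^2+d4^2).
  set (M := Rmax 1 Sig).
  assert (HA : 0 <= A2) by (unfold A2; nra).
  assert (HD : 0 <= D2) by (unfold D2; nra).
  assert (HM1 : 1 <= M) by apply Rmax_l.
  assert (HM2 : Sig <= M) by apply Rmax_r.
  set (L := a1*d1 + a2*(Sig*d2) + a3*(Sig*d3) + a4*(/2*d4)).
  set (Q := a1*0 + a2*(/2*d2^2) + a3*(d2*d3) + a4*(/2*d3^2)).
  assert (Hq : n * a1 + / 2 * a2 * (s ^ 2 - Sig ^ 2) + s * e * a3 + / 2 * (e ^ 2 + x) * a4 = L + Q).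
  { unfold L, Q, d1, d2, d3, d4. field. }
  rewrite Hq.
  assert (sA := sqrt_pos A2). assert (sD := sqrt_pos D2).
  assert (eA := sqrt_sqrt A2 HA). assert (eD := sqrt_sqrt D2 HD).
  assert (HL : Rabs L <= M * sqrt A2 * sqrt D2).
  { apply abs_le_sq. apply Rmult_le_pos; [apply Rmult_le_pos|]; lra.
    eapply Rle_trans. apply cs4. fold A2.
    assert (Hb : (d1 ^ 2 + (Sig * d2) ^ 2 + (Sig * d3) ^ 2 + (/ 2 * d4) ^ 2) <= M^2 * D2).
    { unfold D2. assert (Sig^2 <= M^2) by nra. assert (1 <= M^2) by nra. nra. }
    replace ((M * sqrt A2 * sqrt D2)^2) with (A2 * (M^2 * D2)).
    2:{ replace ((M * sqrt A2 * sqrt D2)^2) with (M^2 * (sqrt A2 * sqrt A2) * (sqrt D2 * sqrt D2)) by ring.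
        rewrite eA, eD. ring. }
    apply Rmult_le_compat_l; auto. }
  assert (HQ : Rabs Q <= sqrt A2 * sqrt D2 ^ 2).
  { apply abs_le_sq. nra.
    eapply Rle_trans. apply cs4. fold A2.
    replace ((sqrt A2 * sqrt D2 ^ 2)^2) with (A2 * (D2 * D2)).
    2:{ replace ((sqrt A2 * sqrt D2 ^ 2)^2) with ((sqrt A2 * sqrt A2) * (sqrt D2 * sqrt D2) * (sqrt D2 * sqrt D2)) by ring.
        rewrite eA, eD. ring. }
    apply Rmult_le_compat_l; auto. unfold D2. nra. }
  eapply Rle_trans. apply Rabs_triang. lra.
Qed.
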